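(* Let $G$ be a finite solvable group and suppose given integers $n(H,\phi)$ for all pairs $(H,\phi)$ with $H$ a subgroup of $G$ and $\phi$ a character of $H$, satisfying: (ACH1) $n(H,\phi_1+\phi_2)=n(H,\phi_1)+n(H,\phi_2)$ for all characters $\phi_1,\phi_2$ of $H$; (ACH2) $n(G,\mathrm{Ind}_H^G\phi)=n(H,\phi)$ for every subgroup $H$ and every character $\phi$ of $H$; (ACH3) $n(H,\phi)\ge0$ for every subgroup $H$ and every one-dimensional character $\phi$ of $H$. Let $H$ be a subgroup of $G$, $\chi$ a one-dimensional character of $G$ and $\phi$ a one-dimensional character of $H$. Then \[n(G,\mathrm{Ind}_H^G\phi)\ge(\chi|_H,\phi)\,n(G,\chi).\]
   Context: $(\cdot,\cdot)$ is the standard inner product of class functions, $(f_1,f_2)=\frac1{|H|}\sum_{h\in H}f_1(h)\overline{f_2(h)}$. $\mathrm{Ind}_H^G$ denotes induction of characters; a one-dimensional character is a character of degree $1$. *)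

(* Defs.v *)
From HB Require Import structures.
From mathcomp Require Import all_boot all_order all_algebra all_fingroup all_solvable all_field all_character.
Set Implicit Arguments. Unset Strict Implicit. Unset Printing Implicit Defensive.

(* Main.v *)
Require Import Defs.
From HB Require Import structures.
From mathcomp Require Import all_boot all_order all_algebra all_fingroup all_solvable all_field all_character.
Import Order.TTheory GRing.Theory Num.Theory.
Local Open Scope ring_scope.

Lemma max_monomial (gT : finGroupType) (K M : {group gT}) :
  solvable K -> maximal M K -> forall r : Iirr K,
  r \in irr_constt ('Ind[K] (1 : 'CF(M))) ->
  exists2 T : {group gT}, T \subset K &
    exists2 eta : 'CF(T), eta \is a linear_char & 'chi_r = 'Ind[K] eta.
Proof.
move=> solK maxM r rpi.
have [prMK maxM'] := maxgroupP maxM.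
have sMK := proper_sub prMK.
pose P := [pred X : {group gT} | (X <| K)%g && ~~ (X \subset M)].
have PK : P K by rewrite /= normal_refl; case/andP: (prMK).
have [A minA _] := mingroup_exists PK.
case/mingroupP: minA => /andP[nAK nsAM] minA.
have sAK := normal_sub nAK.
have solA := solvableS sAK solK.
have sA'M : (A^`(1))%g \subset M.
  apply/negPn/negP => h.
  have PA' : P (A^`(1))%G by rewrite /= h andbT (char_normal_trans (der_char 1 A) nAK).
  have eqA := minA _ PA' (der_sub 1 A).
  have ntA : A :!=: 1%g by apply: contraNneq nsAM => ->; exact: sub1G.
  have := sol_der1_proper solA (subxx A) ntA.
  have eqA' : (A^`(1))%g = A by have := congr1 val eqA.
  by rewrite eqA' properxx.
pose B := (A :&: M)%G.
have sBA : B \subset A := subsetIl _ _.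
have nBA : (B <| A)%g.
  by apply: sub_der1_normal sBA; rewrite subsetI der_sub sA'M.
have defK : (A <*> M)%g = K.
  have sJK : (A <*> M)%g \subset K by rewrite join_subG sAK sMK.
  apply/eqP; rewrite eqEsubset sJK /=; apply: contraR nsAM => nKJ.
  have prJ : (A <*> M)%G \proper K by rewrite properE sJK nKJ.
  rewrite -(maxM' _ prJ (joing_subr _ _)); exact: joing_subl.
have nAM : M \subset 'N(A)%g := subset_trans sMK (normal_norm nAK).
have defAM : (A * M)%g = K by rewrite -norm_joinEr.
have nBK : K \subset 'N(B)%g.
  by rewrite -defK join_subG (normal_norm nBA) normsI ?normG.
have card : (#|K| * #|B| = #|A| * #|M|)%N by rewrite (mul_cardG A M) defAM.
have ResPi : 'Res[A] ('Ind[K] (1 : 'CF(M))) = 'Ind[A] (1 : 'CF(B)).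
  apply/cfun_inP => a Aa; rewrite cfResE // cfIndE // (cfInd_cfun1 nBA) cfunE cfuniE //.
  have -> : \sum_(y in K) (1 : 'CF(M)) (a ^ y)%g = \sum_(y in K) ((a \in B)%:R : algC).
    apply: eq_bigr => y Ky; rewrite cfun1E; congr (_%:R).
    have Ay : (a ^ y)%g \in A by rewrite memJ_norm // (subsetP (normal_norm nAK)).
    by rewrite -(memJ_norm a (subsetP nBK y Ky)) inE Ay.
  rewrite sumr_const natf_indexg //.
  rewrite -(mulr_natl _ #|K|) mulrA; congr (_ * _).
  apply/eqP; rewrite mulrC eqr_div ?pnatr_eq0 -?lt0n ?cardG_gt0 //.
  by rewrite -!natrM eqr_nat card.
have mj : forall j : Iirr A, '['Res[A] ('Ind[K] (1 : 'CF(M))), 'chi_j] != 0 ->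
    'chi_j \is a linear_char /\ '['Res[A] ('Ind[K] (1 : 'CF(M))), 'chi_j] = 1.
  move=> j; rewrite ResPi -Frobenius_reciprocity => nz.
  have c0 : 0 \in irr_constt ('Res[B] 'chi_j).
    by rewrite irr_consttE irr0 cfdotC conjC_eq0.
  have kB := constt0_Res_cfker nBA c0.
  have lin : 'chi_j \is a linear_char.
    by rewrite lin_irr_der1 (subset_trans _ kB) // subsetI der_sub sA'M.
  split=> //; rewrite cfRes_sub_ker // lin_char1 // scale1r; exact: cfnorm1.
have Npi : 'Ind[K] (1 : 'CF(M)) \is a character by rewrite cfInd_char ?cfun1_char.
have [phi Nphi defpi] := constt_charP r Npi rpi.
have [t tr] := constt_cfRes_irr A r.
have enz := tr; rewrite irr_consttE in enz.
have [k ek] := natrP (Cnat_cfdot_char_irr t (cfRes_char A (irr_char r))).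
have [l el] := natrP (Cnat_cfdot_char_irr t (cfRes_char A Nphi)).
have mt : '['Res[A] ('Ind[K] (1 : 'CF(M))), 'chi_t] = (k + l)%:R.
  by rewrite defpi raddfD cfdotDl ek el natrD.
have knz : k != 0%N by rewrite -(pnatr_eq0 algC) -ek.
have mtnz : '['Res[A] ('Ind[K] (1 : 'CF(M))), 'chi_t] != 0.
  by rewrite mt pnatr_eq0 addn_eq0 negb_and knz.
have [lint mt1] := mj t mtnz.
have e1 : '['Res[A] 'chi_r, 'chi_t] = 1.
  move: mt1; rewrite mt ek => /eqP; rewrite -[1]/(1%:R) eqr_nat => /eqP kl.
  have k1 : k = 1%N by move: knz kl; clear; case: k => [|[|k]].
  by rewrite k1.
have [partA _ imB _ partD] := constt_Inertia_bijection t nAK.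
have rB : r \in irr_constt ('Ind[K] 'chi_t) by rewrite constt_Ind_Res.
move: rB e1; rewrite -imB => /imsetP[s sA ->] e1.
exists ('I_K['chi_t])%G; first exact: Inertia_sub.
exists 'chi_s; last by rewrite /Ind_Iirr cfIirrE // partA.
have hd := partD s sA; simpl in hd.
rewrite /Ind_Iirr cfIirrE ?partA // in e1.
have ts : t \in irr_constt ('Res[A] 'chi_s) by rewrite -constt_Ind_Res.
have nAT := normal_Inertia 'chi_t sAK.
have := Clifford_Res_sum_cfclass nAT ts.
rewrite cfclass_invariant ?subsetIr ?subsetIl // big_seq1 hd e1 scale1r => resS.
by rewrite qualifE /= irr_char /= -(cfRes1 A) resS lin_char1.
Qed.

Theorem proposition5p2p1 (gT : finGroupType) (G : {group gT})
  (n : forall H : {group gT}, 'CF(H) -> int)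
  (solG : solvable G)
  (ACH1 : forall H : {group gT}, H \subset G ->
     forall phi1 phi2 : 'CF(H), phi1 \is a character -> phi2 \is a character ->
     n H (phi1 + phi2) = n H phi1 + n H phi2)
  (ACH2 : forall H : {group gT}, H \subset G ->
     forall phi : 'CF(H), phi \is a character ->
     n G ('Ind[G] phi) = n H phi)
  (ACH3 : forall H : {group gT}, H \subset G ->
     forall phi : 'CF(H), phi \is a linear_char -> 0 <= n H phi)
  (H : {group gT}) (sHG : H \subset G)
  (chi : 'CF(G)) (chi_lin : chi \is a linear_char)
  (phi : 'CF(H)) (phi_lin : phi \is a linear_char) :
  '['Res[H] chi, phi] * (n G chi)%:~R <= (n G ('Ind[G] phi))%:~R :> algC.
Proof.
have nInd : forall K L : {group gT}, K \subset G -> L \subset K ->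
    forall th : 'CF(L), th \is a character -> n K ('Ind[K] th) = n L th.
  move=> K L sKG sLK th Nth.
  rewrite -(ACH2 _ sKG) ?cfInd_char // (cfIndInd _ sKG sLK) ACH2 //.
  exact: subset_trans sLK sKG.
have n0 : forall K : {group gT}, K \subset G -> n K 0 = 0.
  move=> K sKG; have h := ACH1 K sKG 0 0 (rpred0 _) (rpred0 _).
  by apply: (addrI (n K 0)); rewrite addr0 -h addr0.
have nMn : forall K : {group gT}, K \subset G -> forall th : 'CF(K),
    th \is a character -> forall k, n K (th *+ k) = n K th *+ k.
  move=> K sKG th Nth; elim=> [|k IH]; first by rewrite !mulr0n n0.
  by rewrite !mulrS ACH1 ?rpredMn // IH.
have nsum : forall K : {group gT}, K \subset G -> forall (I : finType) (P : pred I)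
    (F : I -> 'CF(K)), (forall i, F i \is a character) ->
    n K (\sum_(i | P i) F i) = \sum_(i | P i) n K (F i).
  move=> K sKG I P F NF.
  suff [] : (\sum_(i | P i) F i) \is a character /\
            n K (\sum_(i | P i) F i) = \sum_(i | P i) n K (F i) by [].
  apply: (big_ind2 (fun x y => x \is a character /\ n K x = y)).
  - by rewrite rpred0 n0.
  - by move=> x1 x2 y1 y2 [Nx1 <-] [Ny1 <-]; rewrite rpredD // ACH1.
  - by move=> i _; rewrite NF.
have claim : forall m (K : {group gT}), (#|K| <= m)%N -> K \subset G ->
    forall (L : {group gT}) (c : 'CF(K)), L \subset K -> c \is a linear_char ->
    n K c <= n K ('Ind[K] ('Res[L] c)).
  elim=> [|m IH] K cK sKG L c sLK lc.
    by move: (cardG_gt0 K); rewrite leqn0 in cK; rewrite (eqP cK).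
  have solK := solvableS sKG solG.
  have [eqLK | [M maxM sLM]] := maximal_exists sLK.
    have eqLK' : L = K by apply: val_inj.
    by subst L; rewrite cfRes_id cfInd_id.
  have [prMK _] := maxgroupP maxM.
  have sMK := proper_sub prMK.
  have sMG := subset_trans sMK sKG.
  have cM : (#|M| <= m)%N by rewrite -ltnS (leq_trans (proper_card prMK)).
  have Nc := lin_charW lc.
  have step1 : n K c <= n K ('Ind[K] ('Res[M] c)).
    set pi := 'Ind[K] (1 : 'CF(M)).
    have Npi : pi \is a character by rewrite cfInd_char ?cfun1_char.
    have -> : 'Ind[K] ('Res[M] c) = pi * c by rewrite -cfIndM // mul1r.
    rewrite (cfun_sum_cfdot pi) mulr_suml.
    under eq_bigr => i _ do rewrite -scalerAl.
    rewrite nsum //; last first.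
      by move=> i; rewrite rpredZ_nat ?Cnat_cfdot_char_irr // rpredM ?irr_char.
    rewrite (bigD1 (0 : Iirr K)) //=.
    have -> : '[pi, 'chi_0] = 1.
      by rewrite irr0 -Frobenius_reciprocity cfRes_cfun1 cfnorm1.
    rewrite scale1r irr0 mul1r lerDl; apply: sumr_ge0 => i _.
    have [k ek] := natrP (Cnat_cfdot_char_irr i Npi).
    rewrite ek scaler_nat nMn ?rpredM ?irr_char //.
    case: k ek => [|k] ek; first by rewrite mulr0n.
    apply: mulrn_wge0.
    have ri : i \in irr_constt pi by rewrite irr_consttE ek pnatr_eq0.
    have [T sTK [eta leta defr]] := @max_monomial _ K M solK maxM i ri.
    have sTG := subset_trans sTK sKG.
    rewrite defr -cfIndM // nInd //; last by rewrite rpredM ?(lin_charW leta) ?cfRes_char.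
    by apply: ACH3 => //; rewrite rpredM ?cfRes_lin_char.
  apply: (le_trans step1).
  rewrite nInd ?cfRes_char //.
  apply: (le_trans (IH M cM sMG L ('Res[M] c) sLM (cfRes_lin_char _ lc))).
  rewrite cfResRes // -(nInd K M) ?cfInd_char ?cfRes_char //.
  by rewrite cfIndInd.
have key := claim _ G (leqnn _) (subxx G) H chi sHG chi_lin.
have [i defi] := irrP (lin_char_irr (cfRes_lin_char H chi_lin)).
have [j defj] := irrP (lin_char_irr phi_lin).
rewrite defi defj cfdot_irr; case: eqP => [eij | _].
  by rewrite mul1r -eij -defi ler_int.
rewrite mul0r ler0z ACH2 ?irr_char // -defj; exact: ACH3.
Qed.
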